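(* Let $X,Y$ be measurable spaces and $\hat\nu$ a probability kernel. Then (1) the map $\pi\mapsto H^{\hat\nu}(\pi)$ on probabilities on $X\times Y$ is concave; (2) if $\pi_n,\pi$ are probabilities on $X\times Y$ such that $\int f\,d\pi_n\to\int f\,d\pi$ for every bounded measurable $f:X\times Y\to\mathbb{R}$, then $\limsup_n H^{\hat\nu}(\pi_n)\le H^{\hat\nu}(\pi)$.
   Context: A probability kernel is a family $\hat\nu=\{\hat\nu^y: y\in Y\}$ of probabilities on $X$ such that $y\mapsto\hat\nu^y(B)$ is measurable for each measurable $B\subset X$. $\mathcal{F}(\pi)$ is the set of measurable functions whose $\pi$-integral is well defined, and $H^{\hat\nu}(\pi)=-\sup\{\int c\,d\pi:\ c\in\mathcal{F}(\pi),\ \int e^{c(x,y)}\hat\nu^y(dx)=1\ \forall y\}$. *)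

(* Defs.v *)
From HB Require Import structures.
From mathcomp Require Import all_boot all_order all_algebra.
From mathcomp Require Import all_classical all_reals all_analysis.
Set Implicit Arguments. Unset Strict Implicit. Unset Printing Implicit Defensive.
Import Order.TTheory GRing.Theory Num.Theory.
Local Open Scope classical_set_scope.
Local Open Scope ring_scope.
Local Open Scope ereal_scope.

Definition integral_well_defined d (T : measurableType d) (R : realType)
  (mu : set T -> \bar R) (f : T -> \bar R) : Prop :=
  (\int[mu]_x maxe (f x) 0 < +oo) \/ (\int[mu]_x maxe (- f x) 0 < +oo).

Definition calF d1 d2 (X : measurableType d1) (Y : measurableType d2)
  (R : realType) (pi : probability (X * Y)%type R) : set (X * Y -> R) :=
  [set c | measurable_fun setT c /\
           integral_well_defined pi (fun z => (c z)%:E)].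

Definition Hnu d1 d2 (X : measurableType d1) (Y : measurableType d2)
  (R : realType) (nu : R.-pker Y ~> X) (pi : probability (X * Y)%type R)
  : \bar R :=
  - ereal_sup [set \int[pi]_z (c z)%:E | c in
      [set c | calF pi c /\
               forall y : Y, \int[nu y]_x (expR (c (x, y)))%:E = 1]].

(* Main.v *)
Require Import Defs.
From HB Require Import structures.
From mathcomp Require Import all_boot all_order all_algebra.
From mathcomp Require Import all_classical all_reals all_analysis.
From mathcomp Require Import measurable_realfun.
From mathcomp Require Import lra.
Import Order.TTheory GRing.Theory Num.Theory.
Set Implicit Arguments. Unset Strict Implicit. Unset Printing Implicit Defensive.
Local Open Scope classical_set_scope.
Local Open Scope ring_scope.
Local Open Scope ereal_scope.

Section aux.
Context (d1 d2 : measure_display) (X : measurableType d1)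
  (Y : measurableType d2) (R : realType) (nu : R.-pker Y ~> X).

Definition Adm (pi : probability (X * Y)%type R) :=
  [set c | calF pi c /\ forall y : Y, \int[nu y]_x (expR (c (x, y)))%:E = 1].

Definition Sv (pi : probability (X * Y)%type R) :=
  ereal_sup [set \int[pi]_z (c z)%:E | c in Adm pi].

Lemma HnuE pi : Hnu nu pi = - Sv pi. Proof. by []. Qed.

Lemma Sv_ub pi c : Adm pi c -> \int[pi]_z (c z)%:E <= Sv pi.
Proof. by move=> h; apply: ereal_sup_ubound; exists c. Qed.

Lemma Sv_ge0 pi : 0 <= Sv pi.
Proof.
have -> : 0 = \int[pi]_z ((fun _ : X * Y => 0%R) z)%:E.
  by rewrite integral0_eq.
apply: Sv_ub; split; first split.
- exact: measurable_cst.
- by left; rewrite integral0_eq//= => z _; rewrite maxxx.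
- move=> y; rewrite expR0 (_ : (fun x => _) = cst 1%:E)//.
  by rewrite integral_cst// prob_kernel mule1.
Qed.

Lemma Sv_ext (p q : probability (X * Y)%type R) : (forall A, measurable A -> p A = q A) -> Sv p = Sv q.
Proof.
move=> pq.
have E (g : X * Y -> \bar R) : \int[p]_z g z = \int[q]_z g z.
  by apply: eq_measure_integral => A mA _; exact: pq.
rewrite /Sv; congr ereal_sup; apply/seteqP; split => _ [c [[mc wd] hc] <-];
  exists c; rewrite ?E//; split => //; split => //;
  by move: wd; rewrite /integral_well_defined !E.
Qed.

Lemma int_cst_nu (r : R) y : \int[nu y]_x r%:E = r%:E.
Proof.
by rewrite (_ : (fun x => _) = cst r%:E)// integral_cst// prob_kernel mule1.
Qed.

End aux.
Section conc.
Context (d1 d2 : measure_display) (X : measurableType d1)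
  (Y : measurableType d2) (R : realType) (nu : R.-pker Y ~> X).

Lemma alg_conc (t s : R) (a1 a2 : \bar R) (b1 b2 : R) (S1 S2 : \bar R) :
  (0 <= t)%R -> (0 <= s)%R -> a1 - b1%:E <= S1 -> a2 - b2%:E <= S2 ->
  (t%:E * a1 + s%:E * a2) - (t%:E * b1%:E + s%:E * b2%:E) <=
  t%:E * S1 + s%:E * S2.
Proof.
move=> t0 s0 h1 h2.
apply: (le_trans _ (leeD (lee_wpmul2l _ h1) (lee_wpmul2l _ h2))); last 2 first.
- by rewrite lee_fin.
- by rewrite lee_fin.
rewrite !muleBr// ?fin_num_adde_defl// -!EFinM addeACA oppeD//.
Qed.

Lemma Sv_conv (p1 p2 p : probability (X * Y)%type R) (t : R) :
  (0 < t < 1)%R ->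
  (forall A, measurable A -> p A = t%:E * p1 A + (1 - t)%:E * p2 A) ->
  Sv nu p <= t%:E * Sv nu p1 + (1 - t)%:E * Sv nu p2.
Proof.
move=> /andP[t0 t1] hp.
have t0' : (0 <= t)%R by exact: ltW.
have s0' : (0 <= 1 - t)%R by rewrite subr_ge0 ltW.
have s0 : (0 < 1 - t)%R by rewrite subr_gt0.
have mix (g : (X * Y)%type -> \bar R) : measurable_fun [set: (X * Y)%type] g -> (forall z, 0 <= g z) ->
    \int[p]_z g z = t%:E * \int[p1]_z g z + (1 - t)%:E * \int[p2]_z g z.
  move=> mg g0.
  rewrite (eq_measure_integral (measure_add (mscale (NngNum t0') p1)
                                            (mscale (NngNum s0') p2))); last first.
    move=> A mA _; apply: (eq_trans (hp A mA)); symmetry.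
    exact: measure_addE.
  apply: (eq_trans (ge0_integral_measure_add _ _ _ _ _)) => //.
  by congr (_ + _); apply: ge0_integral_mscale.
apply: ge_ereal_sup => _ [c [[mc wd] hc] <-].
set f := fun z => (c z)%:E.
have mf : measurable_fun setT f by exact/measurable_EFinP.
have mfp := measurable_funepos mf.
have mfn := measurable_funeneg mf.
rewrite integralE.
rewrite (mix _ mfp (funepos_ge0 _)) (mix _ mfn (funeneg_ge0 _)).
set A1 := \int[p1]_z f^\+ z; set A2 := \int[p2]_z f^\+ z.
set B1 := \int[p1]_z f^\- z; set B2 := \int[p2]_z f^\- z.
have A10 : 0 <= A1 by exact: integral_ge0.
have A20 : 0 <= A2 by exact: integral_ge0.
have B10 : 0 <= B1 by exact: integral_ge0.
have B20 : 0 <= B2 by exact: integral_ge0.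
have tA : 0 <= t%:E * A1 + (1 - t)%:E * A2.
  by rewrite adde_ge0// mule_ge0.
have [B1y|B1f] := eqVneq B1 +oo.
  have -> : t%:E * B1 + (1 - t)%:E * B2 = +oo.
    by rewrite B1y muleC gt0_mulye ?lte_fin// addye// gt_eqF// (lt_le_trans _ (mule_ge0 _ _)).
  by rewrite addeNy leNye.
have [B2y|B2f] := eqVneq B2 +oo.
  have -> : t%:E * B1 + (1 - t)%:E * B2 = +oo.
    rewrite B2y [X in _ + X]muleC gt0_mulye ?lte_fin// addeC addye//.
    by rewrite gt_eqF// (lt_le_trans _ (mule_ge0 _ _)).
  by rewrite addeNy leNye.
have adm (q : probability (X * Y)%type R) : \int[q]_z f^\- z != +oo ->
    \int[q]_z f z <= Sv nu q.
  move=> qf; apply: Sv_ub; split => //; split => //.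
  right; rewrite ltey; move: qf.
  by under eq_integral do rewrite funenegE.
have h1 := adm _ B1f; have h2 := adm _ B2f.
rewrite integralE -/A1 -/B1 in h1; rewrite integralE -/A2 -/B2 in h2.
have [b1 eb1] : exists b1, B1 = b1%:E.
  by exists (fine B1); rewrite fineK// ge0_fin_numE// ltey.
have [b2 eb2] : exists b2, B2 = b2%:E.
  by exists (fine B2); rewrite fineK// ge0_fin_numE// ltey.
rewrite eb1 eb2 in h1 h2 *.
by apply: alg_conc => //; exact: ltW.
Qed.
End conc.
Section p1.
Context (d1 d2 : measure_display) (X : measurableType d1)
  (Y : measurableType d2) (R : realType) (nu : R.-pker Y ~> X).

Lemma part1 (p1 p2 p : probability (X * Y)%type R) (t : R) :
     (0 <= t <= 1)%R ->
     (forall A, measurable A -> p A = t%:E * p1 A + (1 - t)%:E * p2 A) ->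
     t%:E * Hnu nu p1 + (1 - t)%:E * Hnu nu p2 <= Hnu nu p.
Proof.
move=> /andP[t0 t1] hp.
have s0 : (0 <= 1 - t)%R by rewrite subr_ge0.
rewrite !HnuE !muleN -oppeD; last first.
  by apply: ge0_adde_def; rewrite inE mule_ge0// ?lee_fin// Sv_ge0.
rewrite leeN2.
have [te|tn0] := eqVneq t 0%R.
  rewrite te mul0e add0e subr0 mul1e//.
  suff -> : Sv nu p = Sv nu p2 by [].
  apply: Sv_ext => A mA; apply: (eq_trans (hp A mA)); rewrite te mul0e add0e subr0 mul1e//.
have [te1|tn1] := eqVneq t 1%R.
  rewrite te1 mul1e subrr mul0e adde0//.
  suff -> : Sv nu p = Sv nu p1 by [].
  apply: Sv_ext => A mA; apply: (eq_trans (hp A mA)); rewrite te1 mul1e subrr mul0e adde0//.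
apply: Sv_conv => //.
by rewrite lt_neqAle eq_sym tn0 t0 lt_neqAle tn1 t1.
Qed.
End p1.
Lemma norm_between (R : realType) (lo hi x : R) :
  (lo <= x <= hi)%R -> (`|x| <= `|lo| + `|hi|)%R.
Proof.
move=> /andP[h1 h2]; rewrite ler_norml; apply/andP; split.
- have := ler_norm (- lo); rewrite normrN => h3.
  have := normr_ge0 hi; lra.
- have := ler_norm hi; have := normr_ge0 lo; lra.
Qed.

Section trunc.
Context (d1 d2 : measure_display) (X : measurableType d1)
  (Y : measurableType d2) (R : realType) (nu : R.-pker Y ~> X).
Variables (c : X * Y -> R) (mc : measurable_fun [set: (X * Y)%type] c)
  (hc : forall y, \int[nu y]_x (expR (c (x, y)))%:E = 1) (M b : R).

Let g := fun z => Num.max (Num.min (c z) M) b.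

Let mg : measurable_fun [set: (X * Y)%type] g.
Proof.
apply: measurable_maxr; last exact: measurable_cst.
by apply: measurable_minr => //; exact: measurable_cst.
Qed.

Let gb z : (b <= g z)%R. Proof. by rewrite /g le_max lexx orbT. Qed.
Let gM z : (g z <= Num.max M b)%R.
Proof. by rewrite /g ge_max !le_max ge_min !lexx !orbT. Qed.
Let gc z : (Num.min (c z) M <= g z)%R. Proof. by rewrite /g le_max lexx. Qed.
Let gexp z : (expR (g z) <= expR (c z) + expR b)%R.
Proof.
rewrite /g; have [_|h] := leP (Num.min (c z) M) b.
  by rewrite lerDr expR_ge0.
rewrite -[X in (X <= _)%R]addr0; apply: lerD; last exact: expR_ge0.
by rewrite ler_expR ge_min lexx.
Qed.

Let mge (y : Y) : measurable_fun [set: X] (fun x => (expR (g (x, y)))%:E).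
Proof.
apply/measurable_EFinP; apply: measurableT_comp => //.
exact: (measurable_fun_pair1 (f := g)).
Qed.

Let I y := \int[nu y]_x (expR (g (x, y)))%:E.

Let Ilow y : (expR b)%:E <= I y.
Proof.
rewrite -(int_cst_nu nu _ y).
by apply: ge0_le_integral => //= x _; rewrite lee_fin ler_expR.
Qed.

Let Iup y : I y <= (1 + expR b)%:E.
Proof.
apply: (@le_trans _ _ (\int[nu y]_x ((expR (c (x, y)))%:E + (expR b)%:E))).
  apply: ge0_le_integral => //.
  - apply: emeasurable_funD => //.
    apply/measurable_EFinP; apply: measurableT_comp => //.
    exact: (measurable_fun_pair1 (f := c)).
  - by move=> x _ /=; rewrite -EFinD lee_fin gexp.
rewrite ge0_integralD//.
- by rewrite hc int_cst_nu EFinD.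
- apply/measurable_EFinP; apply: measurableT_comp => //.
  exact: (measurable_fun_pair1 (f := c)).
Qed.

Let mI : measurable_fun [set: Y] I.
Proof.
have := @measurable_fun_integral_finite_kernel _ _ Y X R
  (fun yx => (expR (g (yx.2, yx.1)))%:E) nu.
apply.
- by move=> z /=; rewrite lee_fin expR_ge0.
- apply/measurable_EFinP; apply: measurableT_comp => //.
  apply: (measurableT_comp mg).
  exact: measurable_fun_pair measurable_snd measurable_fst.
Qed.

Let Z y := fine (I y).

Let IZ y : I y = (Z y)%:E.
Proof.
rewrite /Z fineK// ge0_fin_numE ?(le_trans _ (Ilow y)) ?lee_fin ?expR_ge0//.
by rewrite (le_lt_trans (Iup y))// ltry.
Qed.

Let Zlow y : (expR b <= Z y)%R.
Proof. by rewrite -lee_fin -IZ. Qed.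

Let Zup y : (Z y <= 1 + expR b)%R.
Proof. by rewrite -lee_fin -IZ. Qed.

Let Zpos y : (0 < Z y)%R.
Proof. exact: lt_le_trans (expR_gt0 b) (Zlow y). Qed.

Let lnZlow y : (b <= ln (Z y))%R.
Proof.
rewrite -[X in (X <= _)%R](expRK b) ler_ln ?posrE ?expR_gt0 ?Zpos//.
Qed.

Let lnZup y : (ln (Z y) <= expR b)%R.
Proof.
apply: le_trans (le_ln1Dx _); last first.
  by apply: lt_le_trans (expR_ge0 b); rewrite ltrN10.
by rewrite ler_ln ?posrE ?Zpos// ?Zup// (lt_le_trans (Zpos y) (Zup y)).
Qed.

Let c' z := (g z - ln (Z z.2))%R.

Let mc' : measurable_fun [set: (X * Y)%type] c'.
Proof.
apply: measurable_funB => //.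
apply: measurableT_comp; first exact: measurable_ln.
apply: (measurableT_comp (fine_measurable measurableT)).
exact: measurableT_comp mI measurable_snd.
Qed.

Let hc' y : \int[nu y]_x (expR (c' (x, y)))%:E = 1.
Proof.
rewrite /c' /=.
under eq_integral do rewrite expRB lnK ?posrE ?Zpos// EFinM.
rewrite ge0_integralZr//; first by rewrite -/(I y) IZ -EFinM divff// gt_eqF.
all: try by move=> x _; rewrite lee_fin expR_ge0.
all: by rewrite lee_fin invr_ge0 ltW.
Qed.

Let c'low z : (g z - expR b <= c' z)%R.
Proof. by rewrite /c' lerB. Qed.

Let c'up z : (c' z <= Num.max M b - b)%R.
Proof. by rewrite /c' lerB. Qed.

Lemma trunc_exists : exists c2 : (X * Y)%type -> R,
  [/\ measurable_fun [set: (X * Y)%type] c2,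
      (forall y, \int[nu y]_x (expR (c2 (x, y)))%:E = 1),
      (exists B, forall z, (`|c2 z| <= B)%R) &
      forall z, (Num.max (Num.min (c z) M) b - expR b <= c2 z)%R].
Proof.
exists c'; split => //.
exists (`|b - expR b| + `|Num.max M b - b|)%R => z.
apply: norm_between; rewrite c'up andbT.
apply: le_trans (c'low z); by rewrite lerD2r.
Qed.

End trunc.
Section p2.
Context (d1 d2 : measure_display) (X : measurableType d1)
  (Y : measurableType d2) (R : realType) (nu : R.-pker Y ~> X).

Lemma int_cst_p (q : probability (X * Y)%type R) (r : R) :
  \int[q]_z r%:E = r%:E.
Proof.
rewrite (_ : (fun x => _) = cst r%:E)// integral_cst//.
by rewrite -[RHS]mule1; congr (_ * _); exact: probability_setT.
Qed.

Lemma bint (q : probability (X * Y)%type R) (h : (X * Y)%type -> R) :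
  measurable_fun [set: (X * Y)%type] h -> (exists B, forall z, (`|h z| <= B)%R) ->
  q.-integrable [set: (X * Y)%type] (EFin \o h).
Proof.
move=> mh [B hB]; apply: measurable_bounded_integrable => //.
  exact: (@eq_ind _ 1%E (fun v => v < +oo) (ltry 1) _ (esym (probability_setT q))).
exists B; split; first by rewrite num_real.
by move=> M /ltW BM x _ /=; exact: le_trans (hB x) BM.
Qed.

Lemma bounded_Adm (q : probability (X * Y)%type R) (c2 : (X * Y)%type -> R) :
  measurable_fun [set: (X * Y)%type] c2 ->
  (forall y, \int[nu y]_x (expR (c2 (x, y)))%:E = 1) ->
  (exists B, forall z, (`|c2 z| <= B)%R) -> Adm nu q c2.
Proof.
move=> mc2 hc2 [B hB]; split => //; split => //; left.
apply: (@le_lt_trans _ _ (\int[q]_z (Num.max B 0)%:E)); last first.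
  by rewrite int_cst_p ltry.
apply: ge0_le_integral => //.
- by move=> z _; rewrite le_max lexx orbT.
- apply: measurable_maxe => //; apply/measurable_EFinP => //.
- move=> z _; rewrite -EFin_max lee_fin; apply: le_max2 => //.
  exact: le_trans (ler_norm _) (hB z).
Qed.

Lemma esup_mono (u v : (\bar R)^nat) : (forall n, u n <= v n) ->
  limn_esup u <= limn_esup v.
Proof.
move=> uv; rewrite !limn_esup_lim; apply: lee_lim; [exact: is_cvg_esups|exact: is_cvg_esups|].
apply: nearW => n; apply: ge_ereal_sup => _ [k /= kn <-].
by apply: le_trans (uv k) _; apply: ereal_sup_ubound; exists k.
Qed.

End p2.
Section p3.
Context (d1 d2 : measure_display) (X : measurableType d1)
  (Y : measurableType d2) (R : realType) (nu : R.-pker Y ~> X).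
Variables (pn : nat -> probability (X * Y)%type R)
          (p : probability (X * Y)%type R).
Hypothesis hcv : forall f : X * Y -> R, measurable_fun setT f ->
        (exists M : R, forall z, (`|f z| <= M)%R) ->
        (\int[pn n]_z (f z)%:E) @[n --> \oo] --> \int[p]_z (f z)%:E.

Let L := - limn_esup (fun n => Hnu nu (pn n)).

Lemma stepA (c2 : (X * Y)%type -> R) :
  measurable_fun [set: (X * Y)%type] c2 ->
  (forall y, \int[nu y]_x (expR (c2 (x, y)))%:E = 1) ->
  (exists B, forall z, (`|c2 z| <= B)%R) -> \int[p]_z (c2 z)%:E <= L.
Proof.
move=> mc2 hc2 hB.
have cv := hcv mc2 hB.
have le1 : limn_esup (fun n => Hnu nu (pn n)) <=
    limn_esup (fun n => - \int[pn n]_z (c2 z)%:E).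
  apply: esup_mono => n; rewrite HnuE leeN2.
  by apply: Sv_ub; exact: bounded_Adm.
rewrite ((cvg_limn_einf_sup (cvgeN cv)).2) in le1.
by rewrite /L leeNr.
Qed.

Lemma stepB (c : (X * Y)%type -> R) : Adm nu p c -> \int[p]_z (c z)%:E <= L.
Proof.
move=> [[mc _] hc].
set f := fun z => (c z)%:E.
have mf : measurable_fun [set: (X * Y)%type] f by exact/measurable_EFinP.
rewrite integralE.
have [Cy|Cf] := eqVneq (\int[p]_z f^\- z) +oo.
  by rewrite Cy addeNy leNye.
have [C eC] : exists C, \int[p]_z f^\- z = C%:E.
  exists (fine (\int[p]_z f^\- z)); rewrite fineK// ge0_fin_numE ?ltey//.
  exact: integral_ge0.
rewrite eC leeBlDr//.
have key (n : nat) : \int[p]_z mine (f^\+ z) (n%:R)%:E <= L + C%:E.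
  apply/lee_addgt0Pr => e e0.
  have [c2 [mc2 hc2 hB hlow]] := trunc_exists mc hc n%:R (ln e).
  have hL := stepA mc2 hc2 hB.
  set g := fun z => Num.max (Num.min (c z) n%:R) (ln e).
  have mg : measurable_fun [set: (X * Y)%type] g.
    apply: measurable_maxr; last exact: measurable_cst.
    by apply: measurable_minr => //; exact: measurable_cst.
  have gB : exists B, forall z, (`|g z| <= B)%R.
    exists (`|ln e| + `|Num.max n%:R (ln e)|)%R => z; apply: norm_between.
    by rewrite /g le_max lexx orbT /= ge_max !le_max ge_min !lexx !orbT.
  have h1 : \int[p]_z (g z - e)%:E <= \int[p]_z (c2 z)%:E.
    apply: le_integral => //.
    - apply: bint; first by apply: measurable_funB => //; exact: measurable_cst.
      case: gB => B hB'; exists (B + `|e|)%R => z.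
      by apply: le_trans (ler_normB _ _) _; rewrite lerD2r.
    - exact: bint.
    - by move=> z _; rewrite lee_fin; have := hlow z; rewrite lnK ?posrE.
  move: h1; under eq_integral do rewrite EFinB.
  rewrite (integralB_EFin (f1 := g) (f2 := cst e))//; last 2 first.
  - exact: bint.
  - apply: bint; first exact: measurable_cst.
    by exists `|e|%R.
  rewrite int_cst_p integralE => h1.
  have hpos : \int[p]_z mine (f^\+ z) (n%:R)%:E <= \int[p]_z (EFin \o g)^\+ z.
    apply: ge0_le_integral => //.
    - by move=> z _; rewrite le_min funepos_ge0 lee_fin ler0n.
    - apply: measurable_mine; first exact: measurable_funepos.
      exact: measurable_cst.
    - exact/measurable_funepos/measurable_EFinP.
    - move=> z _; rewrite !funeposE /= -!EFin_max -EFin_min lee_fin.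
      apply: (@le_trans _ _ (Num.max (Num.min (c z) n%:R) 0%R)).
        case: (leP (c z) 0%R) => c0.
          by rewrite le_max [X in _ || X]ge_min lexx !orbT.
        by rewrite le_max lexx.
      rewrite ge_max; apply/andP; split; last by rewrite le_max lexx orbT.
      apply: (@le_trans _ _ (g z)); first by rewrite /g le_max lexx.
      by rewrite le_max lexx.
  have hneg : \int[p]_z (EFin \o g)^\- z <= C%:E.
    rewrite -eC; apply: ge0_le_integral => //.
    - exact/measurable_funeneg/measurable_EFinP.
    - exact/measurable_funeneg.
    - move=> z _; rewrite !funenegE /= -!EFin_max lee_fin.
      have gc : (Num.min (c z) n%:R <= g z)%R by rewrite /g le_max lexx.
      rewrite ge_max; apply/andP; split; last by rewrite le_max lexx orbT.
      move: gc; case: (leP (c z) n%:R) => cn gc.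
        apply: (@le_trans _ _ (- c z)%R); first by rewrite lerN2.
        by rewrite le_max lexx.
      by rewrite le_max oppr_le0 (le_trans _ gc) ?orbT.
  have Gnf : \int[p]_z (EFin \o g)^\- z \is a fin_num.
    rewrite ge0_fin_numE ?(le_lt_trans hneg) ?ltry//.
    exact: integral_ge0.
  have := le_trans h1 hL.
  rewrite leeBlDr// leeBlDr// => h2.
  apply: (le_trans hpos); apply: (le_trans h2).
  rewrite addeAC; apply: leeD => //; apply: leeD => //.
have mfp := measurable_funepos mf.
have mmin (n : nat) : measurable_fun [set: (X * Y)%type]
    (fun z => mine (f^\+ z) (n%:R)%:E).
  by apply: measurable_mine => //; exact: measurable_cst.
have mct : \int[p]_z f^\+ z =
    limn (fun n : nat => \int[p]_z mine (f^\+ z) (n%:R)%:E).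
  rewrite -monotone_convergence//.
  - apply: eq_integral => z _; apply/esym; apply: lim_near_cst => //.
    rewrite funeposE /= -EFin_max.
    near=> n; rewrite -EFin_min; congr EFin; apply: min_l.
    by near: n; exact: nbhs_infty_ger.
  - by move=> n z _; rewrite le_min funepos_ge0 lee_fin ler0n.
  - by move=> z _ m k mk; apply: le_min2 => //; rewrite lee_fin ler_nat.
rewrite mct; apply: lime_le; last exact: nearW key.
apply: ereal_nondecreasing_is_cvgn => m k mk; apply: ge0_le_integral => //.
- by move=> z _; rewrite le_min funepos_ge0 lee_fin ler0n.
- by move=> z _; apply: le_min2 => //; rewrite lee_fin ler_nat.
Unshelve. all: by end_near.
Qed.

End p3.

Theorem mainTheorem4 (d1 d2 : measure_display) (X : measurableType d1)
  (Y : measurableType d2) (R : realType) (nu : R.-pker Y ~> X) :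
  (* (1) concavity *)
  (forall (p1 p2 p : probability (X * Y)%type R) (t : R),
     (0 <= t <= 1)%R ->
     (forall A, measurable A -> p A = t%:E * p1 A + (1 - t)%:E * p2 A) ->
     t%:E * Hnu nu p1 + (1 - t)%:E * Hnu nu p2 <= Hnu nu p) /\
  (* (2) upper semicontinuity along weak (setwise, bounded measurable) convergence *)
  (forall (pn : nat -> probability (X * Y)%type R)
          (p : probability (X * Y)%type R),
     (forall f : X * Y -> R, measurable_fun setT f ->
        (exists M : R, forall z, (`|f z| <= M)%R) ->
        (\int[pn n]_z (f z)%:E) @[n --> \oo] --> \int[p]_z (f z)%:E) ->
     limn_esup (fun n => Hnu nu (pn n)) <= Hnu nu p).
Proof.
split.
  by move=> p1 p2 p t; exact: part1.
move=> pn p hcv; rewrite HnuE leeNr.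
apply: ge_ereal_sup => _ [c hc <-].
move: hc; apply: stepB => f mf hf; exact: hcv.
Qed.
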